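(* $\gamma^{L-ID}(\mathcal{T})=\frac14=\gamma^{ID}(\mathcal{T})$; in particular every local identifying code in the triangular grid has density at least $1/4$, and there is a local identifying code in the triangular grid of density $1/4$.
   Context: The triangular grid $\mathcal{T}$ has vertex set $\mathbb{Z}^2$, with $\mathbf{u},\mathbf{v}$ adjacent iff $\mathbf{u}-\mathbf{v}\in\{(\pm1,0),(0,\pm1),(1,1),(-1,-1)\}$. For a nonempty $C\subseteq\mathbb{Z}^2$ and vertex $\mathbf{u}$, $I(\mathbf{u})=N[\mathbf{u}]\cap C$ where $N[\mathbf{u}]$ is the closed neighbourhood. $C$ is a local identifying code if $I(\mathbf{u})\ne\emptyset$ for all $\mathbf{u}$ and $I(\mathbf{u})\ne I(\mathbf{v})$ for all adjacent $\mathbf{u},\mathbf{v}$; it is an identifying code if moreover $I(\mathbf{u})\ne I(\mathbf{v})$ for all distinct $\mathbf{u},\mathbf{v}$. The density of $C$ is $D(C)=\limsup_{n\to\infty}|C\cap Q_n|/|Q_n|$ with $Q_n=\{(i,j)\in\mathbb{Z}^2:|i|\le n,|j|\le n\}$. $\gamma^{L-ID}(G)$ and $\gamma^{ID}(G)$ denote the smallest densities of local identifying and identifying codes in $G$, respectively. *)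

(* Defs.v *)
From HB Require Import structures.
From mathcomp Require Import all_boot all_order all_algebra.
From mathcomp Require Import all_classical all_reals all_analysis.
Set Implicit Arguments. Unset Strict Implicit. Unset Printing Implicit Defensive.
Import Order.TTheory GRing.Theory Num.Theory.
Local Open Scope ring_scope.
Local Open Scope classical_set_scope.

Definition vertex := (int * int)%type.

Definition tri_adj (u v : vertex) : Prop :=
  let d := (u.1 - v.1, u.2 - v.2) in
  d = (1, 0) \/ d = (-1, 0) \/ d = (0, 1) \/ d = (0, -1)
  \/ d = (1, 1) \/ d = (-1, -1).

Definition closed_nbhd (u : vertex) : set vertex := [set w | w = u \/ tri_adj u w].

Definition I_set (C : vertex -> bool) (u : vertex) : set vertex :=
  [set w | closed_nbhd u w /\ C w].

Definition local_id_code (C : vertex -> bool) : Prop :=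
  (exists w, C w) /\
  (forall u, I_set C u !=set0) /\
  (forall u v, tri_adj u v -> I_set C u <> I_set C v).

Definition id_code (C : vertex -> bool) : Prop :=
  (exists w, C w) /\
  (forall u, I_set C u !=set0) /\
  (forall u v, u <> v -> I_set C u <> I_set C v).

Definition count_Q (C : vertex -> bool) (n : nat) : nat :=
  \sum_(i < (2 * n).+1) \sum_(j < (2 * n).+1)
     nat_of_bool (C ((i : nat)%:Z - (n : nat)%:Z, (j : nat)%:Z - (n : nat)%:Z)%R).

Definition density (R : realType) (C : vertex -> bool) : \bar R :=
  limn_esup (fun n => ((count_Q C n)%:R / (((2 * n).+1) ^ 2)%:R : R)%:E).

Definition gamma_LID (R : realType) : \bar R :=
  ereal_inf [set density R C | C in local_id_code].

Definition gamma_ID (R : realType) : \bar R :=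
  ereal_inf [set density R C | C in id_code].

(* Main.v *)
Require Import Defs.
From HB Require Import structures.
From mathcomp Require Import all_boot all_order all_algebra.
From mathcomp Require Import all_classical all_reals all_analysis.
From mathcomp Require Import zify ring lra.
Import Order.TTheory GRing.Theory Num.Theory.
Local Open Scope ring_scope.

Definition o0 : vertex := (Posz 0, Posz 0).
Definition vadd (u v : vertex) : vertex := (u.1 + v.1, u.2 + v.2).
Definition vsub (u v : vertex) : vertex := (u.1 - v.1, u.2 - v.2).
Definition D6 : seq vertex := Eval vm_compute in [:: (1,0); (-1,0); (0,1); (0,-1); (1,1); (-1,-1)].
Definition dl : seq vertex := o0 :: D6.
Arguments vadd : simpl never.
Arguments vsub : simpl never.
Definition nbl (u : vertex) := [seq vadd u d | d <- dl].
Definition cands (e : vertex) := dl ++ [seq vadd e d | d <- dl].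
Definition sepl (u e : vertex) := [seq ((x \in dl), (vsub x e \in dl), vadd u x) | x <- cands e].
Definition sepP (f : vertex -> bool) (p : bool * bool * vertex) := (p.1.1 && f p.2) != (p.1.2 && f p.2).
Definition Sep2 (f : vertex -> bool) (u e : vertex) : bool := has (sepP f) (sepl u e).
Definition adjpairs := [seq p <- [seq (u,v) | u <- dl, v <- dl] | vsub p.1 p.2 \in D6].
Definition CL := [seq sepl p.1 (vsub p.2 p.1) | p <- adjpairs].
Definition LCons (f : vertex -> bool) := all (has (sepP f)) CL.
Definition divtab (k : nat) : nat :=
  match k with 1 => 420 | 2 => 210 | 3 => 140 | 4 => 105 | 5 => 84 | 6 => 70 | 7 => 60 | _ => 0 end%N.
Definition SL := [seq nbl (vsub o0 d) | d <- dl].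
Definition share (f : vertex -> bool) := sumn [seq divtab (count f s) | s <- SL].
Definition offs : seq vertex := Eval vm_compute in
  [seq x <- [seq ((i%:Z - 2)%R, (j%:Z - 2)%R) | i <- iota 0 5, j <- iota 0 5] |
     (x != o0) && ((0 <= x.1 * x.2) ==> (`|x.1| <= 2) && (`|x.2| <= 2)) && ((x.1 * x.2 < 0) ==> (`|x.1| + `|x.2| <= 2)) ].
Definition pts := o0 :: offs.
Definition idx (w : vertex) := index w pts.
Definition SLi := Eval vm_compute in [seq map idx s | s <- SL].
Definition CLi := Eval vm_compute in [seq [seq (p.1, idx p.2) | p <- sl] | sl <- CL].
Lemma SLiE : SLi = [seq map idx s | s <- SL]. Proof. vm_compute. reflexivity. Qed.
Lemma CLiE : CLi = [seq [seq (p.1, idx p.2) | p <- sl] | sl <- CL]. Proof. vm_compute. reflexivity. Qed.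
Definition sepPi (b : seq bool) (p : bool * bool * nat) := (p.1.1 && nth false b p.2) != (p.1.2 && nth false b p.2).
Definition Cons_i (b : seq bool) := all (has (sepPi b)) CLi.
Definition divtabN : nat -> BinNums.N := Eval vm_compute in fun k =>
  match k with 1 => bin_of_nat 420 | 2 => bin_of_nat 210 | 3 => bin_of_nat 140 | 4 => bin_of_nat 105
   | 5 => bin_of_nat 84 | 6 => bin_of_nat 70 | 7 => bin_of_nat 60 | _ => BinNums.N0 end.
Definition N1680 : BinNums.N := Eval vm_compute in bin_of_nat 1680.
Definition shareN (b : seq bool) (l : seq (seq nat)) : BinNums.N :=
  foldr (fun s acc => BinNat.N.add (divtabN (count (nth false b) s)) acc) BinNums.N0 l.
Definition PiU (b : seq bool) := BinNat.N.leb (shareN b SLi) N1680 || ~~ Cons_i b.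
Definition body := Eval cbv -[BinNat.N.add BinNat.N.leb N1680] in fun b1 b2 b3 b4 b5 b6 b7 b8 b9 b10 b11 b12 b13 b14 b15 b16 b17 b18 : bool =>
   PiU [:: true; b1; b2; b3; b4; b5; b6; b7; b8; b9; b10; b11; b12; b13; b14; b15; b16; b17; b18].
Definition ab (k : bool -> bool) := k true && k false.
Definition bigcheck := ab (fun b1 => ab (fun b2 => ab (fun b3 => ab (fun b4 => ab (fun b5 => ab (fun b6 => ab (fun b7 => ab (fun b8 => ab (fun b9 => ab (fun b10 => ab (fun b11 => ab (fun b12 => ab (fun b13 => ab (fun b14 => ab (fun b15 => ab (fun b16 => ab (fun b17 => ab (fun b18 => body b1 b2 b3 b4 b5 b6 b7 b8 b9 b10 b11 b12 b13 b14 b15 b16 b17 b18)))))))))))))))))).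
Lemma bigcheck_ok : bigcheck = true.
Proof. vm_compute. reflexivity. Qed.
Lemma abP k : ab k -> forall b, k b.
Proof. by rewrite /ab => /andP[? ?] []. Qed.

Lemma PiU_all (bs : seq bool) : size bs = 18%N -> PiU (true :: bs).
Proof.
do 18 (case: bs => [//|? bs]); case: bs => // _.
match goal with |- is_true (PiU [:: true; ?b1; ?b2; ?b3; ?b4; ?b5; ?b6; ?b7; ?b8; ?b9; ?b10; ?b11; ?b12; ?b13; ?b14; ?b15; ?b16; ?b17; ?b18]) =>
  have H := bigcheck_ok;
  rewrite /bigcheck in H;
  move: H => /abP/(_ b1)/abP/(_ b2)/abP/(_ b3)/abP/(_ b4)/abP/(_ b5)/abP/(_ b6)/abP/(_ b7)/abP/(_ b8)/abP/(_ b9)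
   /abP/(_ b10)/abP/(_ b11)/abP/(_ b12)/abP/(_ b13)/abP/(_ b14)/abP/(_ b15)/abP/(_ b16)/abP/(_ b17)/abP/(_ b18);
  change (PiU [:: true; b1; b2; b3; b4; b5; b6; b7; b8; b9; b10; b11; b12; b13; b14; b15; b16; b17; b18] -> PiU [:: true; b1; b2; b3; b4; b5; b6; b7; b8; b9; b10; b11; b12; b13; b14; b15; b16; b17; b18]); exact
end.
Qed.

Lemma all_pts_SL : all (fun s => all (fun w => w \in pts) s) SL.
Proof. by vm_compute. Qed.
Lemma all_pts_CL : all (fun sl => all (fun p : bool * bool * vertex => p.2 \in pts) sl) CL.
Proof. by vm_compute. Qed.
Lemma size_offs : size offs = 18%N. Proof. by vm_compute. Qed.

Lemma nthE (f : vertex -> bool) w : w \in pts -> nth false (map f pts) (idx w) = f w.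
Proof.
move=> wp; rewrite (nth_map o0); last by rewrite /idx index_mem.
by rewrite /idx nth_index.
Qed.

Lemma Cons_iE f : Cons_i (map f pts) = LCons f.
Proof.
rewrite /Cons_i CLiE all_map /LCons; apply: eq_in_all => sl slin /=.
rewrite has_map; apply: eq_in_has => p pin /=.
have := all_pts_CL => /allP/(_ _ slin)/allP/(_ _ pin) pp.
by rewrite /sepPi /sepP /= nthE.
Qed.

Lemma shareE f : sumn [seq divtab (count (nth false (map f pts)) s) | s <- SLi] = share f.
Proof. by rewrite SLiE /share -map_comp; congr sumn. Qed.

Lemma shareNE b l : nat_of_bin (shareN b l) = sumn [seq divtab (count (nth false b) s) | s <- l].
Proof.
elim: l => [//|s l IH] /=.
have -> : forall k, nat_of_bin (BinNat.N.add (divtabN k) (shareN b l)) = (nat_of_bin (divtabN k) + nat_of_bin (shareN b l))%N by move=> k; lia.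
by rewrite IH; congr addn; case: (count _ _) => [|[|[|[|[|[|[|[|k]]]]]]]].
Qed.



Lemma local_share (f : vertex -> bool) : f o0 -> LCons f -> (share f <= 1680)%N.
Proof.
move=> f0 cf.
have := @PiU_all (map f offs); rewrite size_map size_offs => /(_ erefl).
have -> : true :: map f offs = map f pts by rewrite /pts /= f0.
rewrite /PiU Cons_iE cf orbF -shareE -shareNE /N1680 => h; lia.
Qed.

Ltac vtac := repeat match goal with x : vertex |- _ => case: x => ? ? end;
  rewrite /vadd /vsub /o0 /=; congr pair; ring.

Lemma vaddK u x : vsub (vadd u x) u = x. Proof. vtac. Qed.
Lemma vsubA w u e : vsub w (vadd u e) = vsub (vsub w u) e. Proof. vtac. Qed.
Lemma vsubK u w : vadd u (vsub w u) = w. Proof. vtac. Qed.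
Lemma vaddA c u x : vadd (vadd c u) x = vadd c (vadd u x). Proof. vtac. Qed.
Lemma vaddsub c p1 p2 : vadd (vadd c p1) (vsub p2 p1) = vadd c p2. Proof. vtac. Qed.
Lemma vsubadd c u v : vsub (vadd c u) (vadd c v) = vsub u v. Proof. vtac. Qed.
Lemma vaddsh c d e : vadd c (vadd (vsub o0 d) e) = vadd (vsub c d) e. Proof. vtac. Qed.
Lemma vsubaddK c d : vsub (vadd c d) d = c. Proof. vtac. Qed.

Lemma tri_adjE u v : tri_adj u v <-> (vsub u v \in D6).
Proof.
case: u v => [a b] [c d]; rewrite /tri_adj /vsub /=; split.
  by move=> [[-> ->]|[[-> ->]|[[-> ->]|[[-> ->]|[[-> ->]|[-> ->]]]]]]; vm_compute.
rewrite !inE => /orP[/eqP ->|/orP[/eqP ->|/orP[/eqP ->|/orP[/eqP ->|/orP[/eqP ->|/eqP ->]]]]];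
  by do ?[left; reflexivity | right].
Qed.

Lemma D6sym u v : (vsub u v \in D6) = (vsub v u \in D6).
Proof. case: u v => [a b] [c d]; rewrite /vsub /= !inE !xpair_eqE; lia. Qed.

Lemma nbhdP u w : closed_nbhd u w <-> (vsub w u \in dl).
Proof.
rewrite /closed_nbhd /= in_cons tri_adjE D6sym; split.
  by move=> [->|->]; rewrite ?orbT // (_ : vsub u u = o0) ?eqxx //; vtac.
case/orP=> [/eqP h|->]; last by right.
by left; rewrite -(vsubK u w) h; clear h; vtac.
Qed.

Lemma I_setP C u w : I_set C u w <-> ((vsub w u \in dl) && C w).
Proof. by rewrite /I_set /= nbhdP; split => [[-> ->]|/andP[]]. Qed.

Lemma I_set_eqP C u v : I_set C u = I_set C v <-> 
  (forall w, ((vsub w u \in dl) && C w) = ((vsub w v \in dl) && C w)).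
Proof.
split=> [h w|h].
  have := I_setP C u w; rewrite h I_setP.
  by move=> [H1 H2]; apply/idP/idP => ?; [apply: H2|apply: H1].
apply/funext => w; apply/propext; rewrite !I_setP h; split => //.
Qed.

Lemma sep_ne C u e : Sep2 C u e -> I_set C u <> I_set C (vadd u e).
Proof.
move=> /hasP[p /mapP[x xin ->] /=]; rewrite /sepP /= => hne /I_set_eqP/(_ (vadd u x)).
by rewrite vsubA !vaddK => h; move: hne; rewrite h eqxx.
Qed.

Lemma ne_sep C u e : I_set C u <> I_set C (vadd u e) -> Sep2 C u e.
Proof.
move=> hne; apply/negPn/negP => hn; apply: hne; apply/I_set_eqP => w.
rewrite vsubA; set x := vsub w u.
have wE : w = vadd u x by rewrite /x vsubK.
case xin : (x \in cands (e)).
  have Hm : (x \in dl, vsub x e \in dl, vadd u x) \in sepl u e by apply/mapP; exists x.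
  by move/hasPn: hn => /(_ _ Hm); rewrite /sepP -wE negbK => /eqP.
have h1 : (x \in dl) = false.
  by apply/negP => h; move: xin; rewrite /cands mem_cat h.
have h2 : (vsub x e \in dl) = false.
  apply/negP => h; move: xin; rewrite /cands mem_cat.
  by rewrite (_ : x \in [seq vadd e d | d <- dl]) ?orbT //; apply/mapP; exists (vsub x e); rewrite ?vsubK.
by rewrite h1 h2.
Qed.

Lemma Sep2_shift C c u e : Sep2 (fun w => C (vadd c w)) u e = Sep2 C (vadd c u) e.
Proof.
rewrite /Sep2 /sepl !has_map; apply: eq_has => x.
by rewrite /sepP /= vaddA.
Qed.

Lemma code_cons C c : local_id_code C -> LCons (fun w => C (vadd c w)).
Proof.
move=> [_ [_ hid]]; apply/allP => sl /mapP[p /=].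
rewrite mem_filter => /andP[hadj _] ->.
rewrite -/(Sep2 _ _ _) Sep2_shift.
apply: ne_sep; rewrite vaddsub; apply: hid.
by apply/tri_adjE; rewrite vsubadd.
Qed.

Lemma vadd0 c : vadd c o0 = c. Proof. vtac. Qed.

Definition cntC (C : vertex -> bool) u := count C (nbl u).

Lemma code_share C c : local_id_code C -> C c ->
  (\sum_(d <- dl) divtab (cntC C (vsub c d)) <= 1680)%N.
Proof.
move=> hC Cc.
have := @local_share (fun w => C (vadd c w)).
rewrite vadd0.
move=> /(_ Cc (code_cons C c hC)).
rewrite /share /SL -map_comp sumnE big_map.
congr (_ <= _)%N; apply: eq_bigr => d _; rewrite [LHS]/comp; congr divtab.
rewrite /cntC /nbl !count_map; apply: eq_count => e /=.
by rewrite vaddsh.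
Qed.

Lemma cnt_bounds C u : local_id_code C -> (0 < cntC C u <= 7)%N.
Proof.
move=> [_ [hne _]]; apply/andP; split; last first.
  by rewrite /cntC (leq_trans (count_size _ _)) // size_map.
have [w /I_setP /andP[wd Cw]] := hne u.
rewrite /cntC -has_count; apply/hasP; exists w => //.
by apply/mapP; exists (vsub w u); rewrite ?vsubK.
Qed.

Lemma divtabK k : (0 < k <= 7)%N -> (k * divtab k = 420)%N.
Proof. by case: k => [|[|[|[|[|[|[|[|k]]]]]]]]. Qed.

Definition T n (g : vertex -> nat) :=
  (\sum_(i < (2 * n).+1) \sum_(j < (2 * n).+1) g (((i : nat)%:Z - (n : nat)%:Z)%R, ((j : nat)%:Z - (n : nat)%:Z)%R))%N.

Lemma countQE C n : count_Q C n = T n (fun w => nat_of_bool (C w)).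
Proof. by []. Qed.

Lemma sum_shift_le (H : nat -> nat) m k p : (k + m <= p)%N ->
  (\sum_(i < m) H (i + k) <= \sum_(i < p) H i)%N.
Proof.
move=> hp; rewrite -(subnKC hp) big_split_ord /= big_split_ord /=.
apply: (leq_trans _ (leq_addr _ _)); apply: (leq_trans _ (leq_addl _ _)).
by apply: leq_sum => i _; rewrite addnC.
Qed.

Lemma shift1 (h : int -> nat) n k : (k <= 2)%N ->
  (\sum_(i < (2 * n).+1) h ((i : nat)%:Z - (n : nat)%:Z + (k%:Z - 1))%R
   <= \sum_(i < (2 * n.+1).+1) h ((i : nat)%:Z - (n.+1 : nat)%:Z)%R)%N.
Proof.
move=> hk.
have E (i : nat) : (i%:Z - n%:Z + (k%:Z - 1)) = ((i + k)%N%:Z - (n.+1)%:Z).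
  rewrite PoszD -addn1 PoszD; ring.
under eq_bigr do rewrite E.
by apply: (sum_shift_le (fun j => h (j%:Z - (n.+1)%:Z)%R)); lia.
Qed.

Lemma T_shift n (g : vertex -> nat) d : d \in dl ->
  (T n (fun w => g (vadd w d)) <= T n.+1 g)%N.
Proof.
move=> hd.
have [k1 [k2 [h1 [h2 ->]]]] : exists k1 k2, (k1 <= 2)%N /\ (k2 <= 2)%N /\ d = (k1%:Z - 1, k2%:Z - 1)%R.
  move: hd; rewrite /dl /D6 !inE.
  case/orP=> [/eqP->|]; first by exists 1%N, 1%N.
  case/orP=> [/eqP->|]; first by exists 2%N, 1%N.
  case/orP=> [/eqP->|]; first by exists 0%N, 1%N.
  case/orP=> [/eqP->|]; first by exists 1%N, 2%N.
  case/orP=> [/eqP->|]; first by exists 1%N, 0%N.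
  case/orP=> [/eqP->|]; first by exists 2%N, 2%N.
  by move=> /eqP->; exists 0%N, 0%N.
rewrite /T /vadd /=.
apply: leq_trans.
  apply: leq_sum => i _.
  exact: (shift1 (fun y => g ((i : nat)%:Z - n%:Z + (k1%:Z - 1), y)%R)).
rewrite exchange_big [X in (_ <= X)%N]exchange_big /=.
apply: leq_sum => j _.
exact: (shift1 (fun x => g (x, (j : nat)%:Z - (n.+1)%:Z)%R)).
Qed.

Lemma T_sum n (I : Type) (s : seq I) (G : I -> vertex -> nat) :
  T n (fun u => \sum_(d <- s) G d u)%N = (\sum_(d <- s) T n (G d))%N.
Proof.
rewrite /T [RHS]exchange_big; apply: eq_bigr => i _ /=.
by rewrite [RHS]exchange_big.
Qed.

Lemma T_mulr n (g : vertex -> nat) k : T n (fun u => g u * k)%N = (T n g * k)%N.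
Proof.
rewrite /T big_distrl; apply: eq_bigr => i _.
by rewrite big_distrl.
Qed.

Lemma T_le n (g h : vertex -> nat) : (forall u, g u <= h u)%N -> (T n g <= T n h)%N.
Proof. by move=> H; apply: leq_sum => i _; apply: leq_sum => j _. Qed.

Lemma T_const n k : T n (fun _ => k) = ((2 * n).+1 * ((2 * n).+1 * k))%N.
Proof.
rewrite /T; under eq_bigr do rewrite big_const_ord iter_addn_0.
by rewrite big_const_ord iter_addn_0 mulnC [X in (_ * X)%N]mulnC.
Qed.

Lemma lower_count C n : local_id_code C ->
  ((2 * n).+1 ^ 2 <= 4 * count_Q C n.+1)%N.
Proof.
move=> hC.
pose F u d := (C (vadd u d) * divtab (cntC C u))%N.
pose G d c := (C c * divtab (cntC C (vsub c d)))%N.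
have key u : (\sum_(d <- dl) F u d = 420)%N.
  rewrite /F -big_distrl /=.
  have -> : (\sum_(d <- dl) (C (vadd u d) : nat))%N = cntC C u.
    by rewrite /cntC /nbl count_map -sumn_count sumnE big_map.
  by rewrite divtabK // cnt_bounds.
have H1 : T n (fun _ => 420%N) = (\sum_(d <- dl) T n (fun u => F u d))%N.
  rewrite -T_sum; apply: eq_bigr => i _; apply: eq_bigr => j _; by rewrite key.
have H2 : (\sum_(d <- dl) T n (fun u => F u d) <= \sum_(d <- dl) T n.+1 (G d))%N.
  rewrite !big_seq; apply: leq_sum => d dd.
  have -> : T n (fun u => F u d) = T n (fun u => G d (vadd u d)).
    by apply: eq_bigr => i _; apply: eq_bigr => j _; rewrite /F /G vsubaddK.
  exact: T_shift.
have H3 : (\sum_(d <- dl) T n.+1 (G d) <= T n.+1 (fun c => C c * 1680))%N.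
  rewrite -T_sum; apply: T_le => c; rewrite /G -big_distrr /=.
  case Cc: (C c) => //=; rewrite !mul1n.
  exact: code_share.
move: (leq_trans H2 H3); rewrite -H1 T_const T_mulr -countQE. 
set q := count_Q C n.+1; set m := (2 * n).+1 => h.
rewrite -(leq_pmul2l (_ : 0 < 420)%N) //.
have -> : (m ^ 2 = m * m)%N by rewrite expnS expn1.
lia.
Qed.

Local Open Scope classical_set_scope.

Definition C0 (w : vertex) : bool := (((w.1 %% 2)%Z == 0) && ((w.2 %% 2)%Z == 0)).
Definition per (u : vertex) : vertex := ((u.1 %% 2)%Z, (u.2 %% 2)%Z).
Definition R4 : seq vertex := [:: (0,0); (0,1); (1,0); (1,1)].
Definition E2 : seq vertex := [seq vsub a b | a <- dl, b <- dl].

Lemma C0_per u x : C0 (vadd u x) = C0 (vadd (per u) x).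
Proof. by rewrite /C0 /vadd /per /= !modzDml. Qed.

Lemma per_in u : per u \in R4.
Proof. case: u => a b; rewrite /per /R4 /= !inE !xpair_eqE; lia. Qed.

Lemma ne_fact : all (fun r => has C0 (nbl r)) R4.
Proof. by vm_compute. Qed.
Lemma sep_fact : all (fun r => all (fun e => (e == o0) || Sep2 C0 r e) E2) R4.
Proof. by vm_compute. Qed.

Lemma vsubxx u : vsub u u = o0. Proof. vtac. Qed.
Lemma vsubsub w u v : vsub v u = vsub (vsub w u) (vsub w v). Proof. vtac. Qed.

Lemma C0_ne u : I_set C0 u !=set0.
Proof.
have : has C0 (nbl (per u)) by move/allP: ne_fact => /(_ _ (per_in u)).
rewrite /nbl !has_map -(eq_has (C0_per u)) => /hasP[d dd Cd].
by exists (vadd u d); apply/I_setP; rewrite vaddK dd.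
Qed.

Lemma C0_sep u e : Sep2 C0 u e = Sep2 C0 (per u) e.
Proof.
rewrite /Sep2 /sepl !has_map; apply: eq_has => x.
by rewrite /sepP /= C0_per.
Qed.

Lemma C0_id : id_code C0.
Proof.
split; first by exists o0.
split; first exact: C0_ne.
move=> u v uv heq.
have [w] := C0_ne u; rewrite heq => /[dup] Iv.
rewrite -heq in Iv => Iu.
move/I_setP: Iu => /andP[wu _]; move/I_setP: Iv => /andP[wv _].
have eE : vsub v u \in E2 by rewrite (vsubsub w) /E2; apply: allpairs_f.
move/allP: sep_fact => /(_ _ (per_in u))/allP/(_ _ eE)/orP[/eqP h|].
  by apply: uv; rewrite -(vsubK u v) h vadd0.
rewrite -C0_sep => /sep_ne; rewrite vsubK; exact.
Qed.

Lemma id_local C : id_code C -> local_id_code C.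
Proof.
move=> [h1 [h2 h3]]; split=> //; split=> // u v /tri_adjE huv.
apply: h3 => e; move: huv; rewrite e vsubxx.
by vm_compute.
Qed.

Lemma sum_parity m p :
  (\sum_(i < m) (~~ odd (i + p)) = if odd p then m./2 else uphalf m)%N.
Proof.
elim: m => [|m IH]; first by rewrite big_ord0; case: (odd p).
rewrite big_ord_recr /= IH; case hp: (odd p) => /=; lia.
Qed.

Lemma count_C0 n : (count_Q C0 n <= n.+1 ^ 2)%N.
Proof.
rewrite countQE /T.
have E (i : nat) : (((i%:Z - n%:Z) %% 2)%Z == 0) = ~~ odd (i + n) by lia.
have S : (\sum_(i < (2 * n).+1) (~~ odd (i + n)) <= n.+1)%N.
  by rewrite sum_parity; case: (odd n); lia.
apply: (@leq_trans (\sum_(i < (2 * n).+1) ((~~ odd (i + n)) * n.+1))%N).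
  apply: leq_sum => i _; rewrite /C0 /= E.
  case: (~~ odd (i + n)) => /=; last by rewrite big1.
  rewrite mul1n; under eq_bigr do rewrite E; exact: S.
by rewrite -big_distrl /= expnS expn1 leq_mul2r S orbT.
Qed.

Lemma real_lb (R : realType) (m q : nat) (e : R) : 0 < e -> 1 <= e * (m.+1)%:R ->
  ((2 * m).+1 ^ 2 <= 4 * q)%N ->
  1 / 4 <= q%:R / ((2 * m.+1).+1 ^ 2)%:R + e.
Proof.
move=> e0 he hq.
have hq' : ((2 * m).+1 ^ 2)%:R <= 4 * (q%:R : R) by rewrite -natrM ler_nat.
set t : R := m%:R; have t0 : 0 <= t by rewrite /t ler0n.
have E1 : (((2 * m).+1 ^ 2)%:R : R) = (2 * t + 1) ^+ 2 by rewrite /t; ring.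
have E2 : (((2 * m.+1).+1 ^ 2)%:R : R) = (2 * t + 3) ^+ 2 by rewrite /t; ring.
have E3 : ((m.+1)%:R : R) = t + 1 by rewrite /t; ring.
rewrite E1 in hq'; rewrite E3 in he; rewrite E2.
set Q : R := q%:R in hq' *.
rewrite -lerBlDr ler_pdivlMr; last by rewrite exprn_gt0 //; lra.
have h1 : 2 * (2 * t + 3) <= e * (2 * t + 3) ^+ 2.
  have -> : e * (2 * t + 3) ^+ 2 = 2 * (2 * t + 3) * (e * (t + 1)) + e * (2 * t + 3) by ring.
  have : 0 <= e * (2 * t + 3) by rewrite mulr_ge0 //; lra.
  have : 0 <= 2 * (2 * t + 3) by lra.
  nra.
nra.
Qed.

Lemma real_ub (R : realType) (k q : nat) (e : R) : 0 < e -> 1 <= e * (k.+1)%:R ->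
  (q <= k.+1 ^ 2)%N ->
  q%:R / ((2 * k).+1 ^ 2)%:R <= 1 / 4 + e.
Proof.
move=> e0 he hq.
have hq' : (q%:R : R) <= (k.+1 ^ 2)%:R by rewrite ler_nat.
set t : R := k%:R; have t0 : 0 <= t by rewrite /t ler0n.
have E1 : (((k.+1) ^ 2)%:R : R) = (t + 1) ^+ 2 by rewrite /t; ring.
have E2 : (((2 * k).+1 ^ 2)%:R : R) = (2 * t + 1) ^+ 2 by rewrite /t; ring.
have E3 : ((k.+1)%:R : R) = t + 1 by rewrite /t; ring.
rewrite E1 in hq'; rewrite E3 in he; rewrite E2.
set Q : R := q%:R in hq' *.
rewrite ler_pdivrMr; last by rewrite exprn_gt0 //; lra.
have h1 : 2 * t + 1 <= e * (2 * t + 1) ^+ 2.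
  have -> : e * (2 * t + 1) ^+ 2 = (2 * t + 1) * (e * (t + 1)) + (2 * t + 1) * (e * t) by ring.
  have : 0 <= e * t by rewrite mulr_ge0 //; lra.
  have : 0 <= 2 * t + 1 by lra.
  nra.
nra.
Qed.

Lemma archi_e (R : realType) (e : R) : 0 < e ->
  exists N : nat, forall k, (N <= k)%N -> 1 <= e * (k.+1)%:R.
Proof.
move=> e0; exists (Num.truncn e^-1) => k hk.
have hN : e^-1 <= (k.+1)%:R.
  by rewrite (le_trans (ltW (truncnS_gt _))) // ler_nat ltnS.
by rewrite -[X in X <= _](mulfV (lt0r_neq0 e0)) ler_wpM2l // ltW.
Qed.

Lemma esupE (R : realType) (u : (\bar R)^nat) : limn_esup u = ereal_inf (range (esups u)).
Proof. by rewrite limn_esup_lim; apply: cvg_lim => //; exact: cvg_esups_inf. Qed.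

Lemma dens_lb (R : realType) C : local_id_code C -> ((1 / 4 : R)%:E <= density R C)%E.
Proof.
move=> hC; rewrite /density esupE; apply: le_ereal_inf_tmp => _ [n _ <-].
apply/lee_addgt0Pr => e e0.
have [N hN] := archi_e R e e0.
pose m := (n + N)%N.
apply: (@le_trans _ _ (((count_Q C m.+1)%:R / ((2 * m.+1).+1 ^ 2)%:R)%:E + e%:E)%E).
  rewrite -EFinD lee_fin; apply: real_lb => //.
    by apply: hN; rewrite /m leq_addl.
  exact: lower_count.
apply: leeD2r; apply: ereal_sup_ubound; exists m.+1 => //=.
by rewrite /m; lia.
Qed.

Lemma dens_C0_ub (R : realType) : (density R C0 <= (1 / 4 : R)%:E)%E.
Proof.
rewrite /density esupE; apply/lee_addgt0Pr => e e0.
have [N hN] := archi_e R e e0.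
apply: ge_ereal_inf; exists (esups (fun n => ((count_Q C0 n)%:R / (((2 * n).+1) ^ 2)%:R : R)%:E) N).
  by exists N.
apply: ge_ereal_sup => _ [k /= hk <-].
rewrite -EFinD lee_fin; apply: real_ub => //.
  exact: hN.
exact: count_C0.
Qed.

Local Open Scope ereal_scope.

Theorem mainTheorem16 (R : realType) :
  gamma_LID R = (1 / 4 : R)%:E /\ gamma_ID R = (1 / 4 : R)%:E /\
  (forall C : vertex -> bool, local_id_code C -> (1 / 4 : R)%:E <= density R C) /\
  (exists C : vertex -> bool, local_id_code C /\ density R C = (1 / 4 : R)%:E).
Proof.
have dC0 : density R C0 = (1 / 4 : R)%:E.
  by apply/eqP; rewrite eq_le dens_C0_ub dens_lb //; apply: id_local; exact: C0_id.
split.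
  apply/eqP; rewrite eq_le; apply/andP; split.
    by apply: ereal_inf_lbound; exists C0 => //; apply: id_local; exact: C0_id.
  by apply: le_ereal_inf_tmp => _ [C hC <-]; exact: dens_lb.
split.
  apply/eqP; rewrite eq_le; apply/andP; split.
    by apply: ereal_inf_lbound; exists C0 => //; exact: C0_id.
  by apply: le_ereal_inf_tmp => _ [C hC <-]; apply: dens_lb; exact: id_local.
split; first by move=> C hC; exact: dens_lb.
by exists C0; split => //; apply: id_local; exact: C0_id.
Qed.
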